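(* Assume the linear band crossing and Band Crossing Scenario described in the context, with limit point $(q^*,p^* )$ at time $t^*$. (i) For sufficiently small $\delta'>0$, the system $$\dot q_-=\partial_pE_-(p_-),\quad \dot p_-=-\partial_qW(q_-),\quad q_-(t^* )=q^*,\ p_-(t^* )=p^*$$ has a unique smooth solution $(q_-(t),p_-(t))\in\mathbb R\times U$ on $[t^*-\delta',t^*+\delta']$. (ii) For sufficiently small $T'\ge t^*+\delta'$, there exists a solution $(q_n(t),p_n(t))\in\mathbb R\times\mathcal B$ on $(t^*,T']$ of $$\dot q_n=\partial_pE_n(p_n),\quad \dot p_n=-\partial_qW(q_n)$$ with $\lim_{t\downarrow t^*}(q_n(t),p_n(t))=(q^*,p^* )$ and $G(E_n(p_n(t)))>0$ for all $t\in(t^*,T']$. It satisfies $(q_-(t),p_-(t))=(q_n(t),p_n(t))$ for all $t\in(t^*,t^*+\delta']$. (iii) Consequently, the map $t\mapsto(\mathfrak q_-(t),\mathfrak p_-(t))$ is smooth on $[t^*-\delta',T']$. This map is defined as $(q_-(t),p_-(t))$ on $[t^*-\delta',t^*+\delta']$ and as $(q_n(t),p_n(t))$ on $[t^*+\delta',T']$.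
   Context: **Potentials.** Let $V:\mathbb R\to\mathbb R$ be smooth and $1$-periodic, and let $W:\mathbb R\to\mathbb R$ be smooth with all derivatives bounded. **Bloch bands.** For $p\in\mathbb R$, $H(p):=\frac12(p-i\partial_z)^2+V(z)$ acts on $1$-periodic functions. Its eigenvalues, ordered with multiplicity, are $E_1(p)\le E_2(p)\le\cdots$, with normalized eigenfunctions $\chi_m(z;p)$. The Brillouin zone is $\mathcal B=[0,2\pi]$, and $G(E_m(p)):=\min_{m'\ne m}|E_m(p)-E_{m'}(p)|$. **Linear band crossing.** $U\subset\mathcal B$ is open with $p^*\in U$, and: - (A1) $E_n(p^* )=E_{n+1}(p^* )$, with no other degeneracy of $E_n,E_{n+1}$ in $U$. - (A2) There is $M>0$ with $|E_m-E_{n+1}|,|E_n-E_m|\ge M$ on $\overline U$ for all $m\notin\{n,n+1\}$. - (A3) The maps $(E_+,\chi_+):=(E_n,\chi_n)$ for $p<p^*$ and $(E_{n+1},\chi_{n+1})$ for $p\ge p^*$, and $(E_-,\chi_-):=(E_{n+1},\chi_{n+1})$ for $p<p^*$ and $(E_n,\chi_n)$ for $p\ge p^*$, are smooth on $U$. - (A4) $\partial_pE_+(p^* )>0>\partial_pE_-(p^* )$. **Band Crossing Scenario.** $(q_0,p_0)$ satisfies $G(E_n(p_0))>0$. The system $\dot q=\partial_pE_n(p)$, $\dot p=-\partial_qW(q)$, $(q,p)(0)=(q_0,p_0)$ has a unique smooth solution on $[0,t^* )$ (with $t^*>0$), along which $G(E_n(p(t)))>0$. Moreover $p(t)\to p^*$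 as $t\uparrow t^*$, $q^*:=\lim_{t\uparrow t^*}q(t)$, and $-\partial_qW(q^* )>0$. *)

(* Defs.v *)
From Stdlib Require Import Reals.
From Coquelicot Require Import Coquelicot.
Open Scope R_scope.

Definition Smooth (f : R -> R) : Prop := forall (k : nat) (x : R), ex_derive_n f k x.

Definition Periodic1 (f : R -> R) : Prop := forall x, f (x + 1) = f x.

Definition DerivWithin (I : R -> Prop) (f : R -> R) (t l : R) : Prop :=
  filterlim (fun h => (f (t + h) - f t) / h)
    (within (fun h => h <> 0 /\ I (t + h)) (locally 0)) (locally l).

Definition SmoothOn (I : R -> Prop) (f : R -> R) : Prop :=
  exists D : nat -> R -> R,
    (forall t, I t -> D O t = f t) /\
    (forall k t, I t -> DerivWithin I (D k) t (D (S k) t)).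

Definition SolvesOn (W h : R -> R) (I : R -> Prop) (q p : R -> R) : Prop :=
  forall t, I t ->
    DerivWithin I q t (Derive h (p t)) /\ DerivWithin I p t (- Derive W (q t)).

Fixpoint fsum (k : nat) (f : nat -> R) : R :=
  match k with O => 0 | S k' => fsum k' f + f k' end.

(** A 1-periodic function u = a + i b (real and imaginary parts a, b) is a
    (smooth) eigenfunction of H(p) = 1/2 (p - i d/dz)^2 + V with eigenvalue lam:
    (p - i d/dz)^2 u = p^2 u - 2 i p u' - u''. *)
Definition BlochEigenfunction (V : R -> R) (p lam : R) (a b : R -> R) : Prop :=
  Smooth a /\ Smooth b /\ Periodic1 a /\ Periodic1 b /\
  (exists z, a z <> 0 \/ b z <> 0) /\
  forall z,
    / 2 * (p ^ 2 * a z + 2 * p * Derive b z - Derive_n a 2 z) + V z * a z = lam * a z /\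
    / 2 * (p ^ 2 * b z - 2 * p * Derive a z - Derive_n b 2 z) + V z * b z = lam * b z.

(** Complex-linear independence of the k functions u_j = a j + i b j. *)
Definition CIndependent (k : nat) (a b : nat -> R -> R) : Prop :=
  forall x y : nat -> R,
    (forall z, fsum k (fun j => x j * a j z - y j * b j z) = 0 /\
               fsum k (fun j => x j * b j z + y j * a j z) = 0) ->
    forall j, (j < k)%nat -> x j = 0 /\ y j = 0.

(** m-th Bloch band E_m(p) (m >= 1): the m-th eigenvalue of H(p), ordered
    increasingly and counted with multiplicity, i.e. the least lam such that
    H(p) has m linearly independent eigenfunctions with eigenvalues <= lam. *)
Definition BlochBand (V : R -> R) (m : nat) (p : R) : R :=
  real (Glb_Rbar (fun lam =>
    exists a b : nat -> R -> R,
      CIndependent m a b /\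
      forall j, (j < m)%nat ->
        exists lj, lj <= lam /\ BlochEigenfunction V p lj (a j) (b j))).

(** Gap G(E_m(p)) = min_{m' <> m} |E_m(p) - E_m'(p)|  (bands indexed from 1). *)
Definition BandGap (V : R -> R) (m : nat) (p : R) : R :=
  real (Glb_Rbar (fun x => exists m', (1 <= m')%nat /\ m' <> m /\
                     x = Rabs (BlochBand V m p - BlochBand V m' p))).

Definition Normalized (a b : R -> R) : Prop :=
  RInt (fun z => a z ^ 2 + b z ^ 2) 0 1 = 1.

Definition closureR (U : R -> Prop) (x : R) : Prop :=
  forall eps, 0 < eps -> exists u, U u /\ Rabs (x - u) < eps.

Definition BandEplus (V : R -> R) (n : nat) (pstar p : R) : R :=
  if Rlt_dec p pstar then BlochBand V n p else BlochBand V (S n) p.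
Definition BandEminus (V : R -> R) (n : nat) (pstar p : R) : R :=
  if Rlt_dec p pstar then BlochBand V (S n) p else BlochBand V n p.

Definition Icc (a b : R) (t : R) : Prop := a <= t <= b.
Definition Ico (a b : R) (t : R) : Prop := a <= t < b.
Definition Ioc (a b : R) (t : R) : Prop := a < t <= b.

(* Main.v *)
Require Import Defs.
From Stdlib Require Import Reals Lra Lia Ranalysis5.
From Coquelicot Require Import Coquelicot.
Open Scope R_scope.

Lemma ballR (x e y : R) : ball x e y <-> Rabs (y - x) < e.
Proof. reflexivity. Qed.
Lemma ballR0 (e y : R) : ball 0 e y <-> Rabs y < e.
Proof. rewrite ballR. now rewrite Rminus_0_r. Qed.

Lemma DW_ed I f t l : DerivWithin I f t l <->
  forall eps, 0 < eps -> exists del, 0 < del /\ forall h, h <> 0 -> I (t+h) -> Rabs h < del ->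
    Rabs ((f (t+h) - f t)/h - l) < eps.
Proof.
  unfold DerivWithin; rewrite filterlim_locally; split.
  - intros H eps He. destruct (H (mkposreal eps He)) as [d Hd].
    exists d; split; [apply cond_pos|]. intros h H0 H1 H2.
    apply (Hd h). now apply ballR0. now split.
  - intros H eps. destruct (H eps (cond_pos eps)) as [d [Hd H']].
    exists (mkposreal d Hd). intros h Hb [H0 H1]. apply ballR.
    apply H'; auto. change (Rabs (h - 0) < d) in Hb; now rewrite Rminus_0_r in Hb.
Qed.

Lemma DW1 {I f t l} : DerivWithin I f t l -> forall eps, 0 < eps -> exists del, 0 < del /\ forall h, h <> 0 -> I (t+h) -> Rabs h < del ->
    Rabs ((f (t+h) - f t)/h - l) < eps.
Proof. apply DW_ed. Qed.
Lemma DW2 {I f t l} : (forall eps, 0 < eps -> exists del, 0 < del /\ forall h, h <> 0 -> I (t+h) -> Rabs h < del ->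
    Rabs ((f (t+h) - f t)/h - l) < eps) -> DerivWithin I f t l.
Proof. apply DW_ed. Qed.

Lemma DW_sub (I J : R -> Prop) f t l : (forall x, J x -> I x) ->
  DerivWithin I f t l -> DerivWithin J f t l.
Proof.
  intros HJ H. apply DW2. generalize (DW1 H); clear H; intro H. intros eps He.
  destruct (H eps He) as [d [Hd H']]. exists d; split; auto.
Qed.

Lemma DW_ext (I : R -> Prop) f g t l : I t -> (forall s, I s -> f s = g s) ->
  DerivWithin I f t l -> DerivWithin I g t l.
Proof.
  intros It Hfg H. apply DW2. generalize (DW1 H); clear H; intro H. intros eps He.
  destruct (H eps He) as [d [Hd H']]. exists d; split; auto.
  intros h h0 h1 h2. rewrite <- !Hfg; auto.
Qed.

Lemma DW_of_derive I f t l : is_derive f t l -> DerivWithin I f t l.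
Proof.
  intro H. apply is_derive_Reals in H. apply DW2. intros eps He.
  destruct (H eps He) as [d Hd]. exists d; split; [apply cond_pos|].
  intros h h0 _ h2. now apply Hd.
Qed.

Lemma derive_of_DW (I : R -> Prop) f t l e : 0 < e -> (forall s, Rabs (s - t) < e -> I s) ->
  DerivWithin I f t l -> is_derive f t l.
Proof.
  intros He HI H. apply is_derive_Reals. generalize (DW1 H); clear H; intro H. intros eps Heps.
  destruct (H eps Heps) as [d [Hd H']].
  assert (Hm : 0 < Rmin d e) by (apply Rmin_pos; auto).
  exists (mkposreal _ Hm). intros h h0 h1. simpl in h1.
  apply H'; auto.
  - apply HI. replace (t + h - t) with h by ring. eapply Rlt_le_trans; [exact h1|apply Rmin_r].
  - eapply Rlt_le_trans; [exact h1|apply Rmin_l].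
Qed.

Lemma DW_cont I f t l : DerivWithin I f t l ->
  forall eps, 0 < eps -> exists del, 0 < del /\ forall s, I s -> Rabs (s - t) < del -> Rabs (f s - f t) < eps.
Proof.
  intros H. generalize (DW1 H); clear H; intro H. intros eps He.
  destruct (H 1 Rlt_0_1) as [d [Hd H']].
  assert (Hl : 0 < Rabs l + 1) by (pose proof (Rabs_pos l); lra).
  assert (Hm : 0 < Rmin d (eps / (Rabs l + 1))).
  { apply Rmin_pos; auto. apply Rdiv_lt_0_compat; auto. }
  exists (Rmin d (eps / (Rabs l + 1))); split; auto.
  intros s Is Hs. destruct (Req_dec s t) as [->|Hst].
  { rewrite Rminus_eq_0, Rabs_R0; auto. }
  set (h := s - t). assert (h <> 0) by (unfold h; lra).
  assert (Hs' : s = t + h) by (unfold h; ring). rewrite Hs' in Is |- *.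
  assert (Hh : Rabs h < d) by (eapply Rlt_le_trans; [exact Hs|apply Rmin_l]).
  specialize (H' h H0 Is Hh).
  assert (E : f (t + h) - f t = h * ((f (t + h) - f t) / h)) by (field; auto).
  rewrite E, Rabs_mult.
  assert (Rabs ((f (t + h) - f t) / h) < Rabs l + 1).
  { replace ((f (t + h) - f t) / h) with (((f (t + h) - f t) / h - l) + l) by ring.
    pose proof (Rabs_triang ((f (t + h) - f t) / h - l) l). lra. }
  assert (Rabs h < eps / (Rabs l + 1)) by (eapply Rlt_le_trans; [exact Hs|apply Rmin_r]).
  apply Rle_lt_trans with (Rabs h * (Rabs l + 1)).
  { apply Rmult_le_compat_l; [apply Rabs_pos|lra]. }
  apply Rlt_le_trans with (eps / (Rabs l + 1) * (Rabs l + 1)).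
  { apply Rmult_lt_compat_r; auto. }
  right; field; lra.
Qed.

Definition WF_dummy := 0.
Definition WF I t := within (fun h => h <> 0 /\ I (t + h)) (locally 0).

Lemma DW_shift I f t l : DerivWithin I f t l ->
  filterlim (fun h => f (t + h)) (WF I t) (locally (f t)).
Proof.
  intros H. pose proof (DW_cont I f t l H) as C.
  apply filterlim_locally. intros eps. destruct (C eps (cond_pos eps)) as [d [Hd Hc]].
  exists (mkposreal d Hd). intros h Hb [h0 h1]. apply ballR. apply Hc; auto.
  change (Rabs (h - 0) < d) in Hb. rewrite Rminus_0_r in Hb.
  rewrite (Rplus_comm t h); unfold Rminus; rewrite Rplus_assoc, Rplus_opp_r, Rplus_0_r; exact Hb.
Qed.

Lemma DW_plus I f g t a b : DerivWithin I f t a -> DerivWithin I g t b ->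
  DerivWithin I (fun s => f s + g s) t (a + b).
Proof.
  intros Hf Hg. unfold DerivWithin.
  apply filterlim_within_ext with (f := fun h => (f (t+h) - f t)/h + (g (t+h) - g t)/h).
  { intros h [h0 _]. field; auto. }
  eapply filterlim_comp_2; [exact Hf|exact Hg|]. apply (filterlim_plus a b).
Qed.

Lemma DW_opp I f t a : DerivWithin I f t a -> DerivWithin I (fun s => - f s) t (- a).
Proof.
  intros Hf. apply DW2. generalize (DW1 Hf); clear Hf; intro Hf. intros eps He.
  destruct (Hf eps He) as [d [Hd H']]. exists d; split; auto.
  intros h h0 h1 h2. specialize (H' h h0 h1 h2).
  replace ((- f (t + h) - - f t) / h - - a) with (- ((f (t + h) - f t) / h - a)) by (field; auto).
  now rewrite Rabs_Ropp.
Qed.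

Lemma DW_mult I f g t a b : DerivWithin I f t a -> DerivWithin I g t b ->
  DerivWithin I (fun s => f s * g s) t (a * g t + f t * b).
Proof.
  intros Hf Hg. pose proof (DW_shift I g t b Hg) as Sg. unfold DerivWithin.
  apply filterlim_within_ext with
    (f := fun h => (f (t+h) - f t)/h * g (t + h) + f t * ((g (t+h) - g t)/h)).
  { intros h [h0 _]. field; auto. }
  eapply filterlim_comp_2; [| |apply (filterlim_plus (a * g t) (f t * b))].
  - eapply filterlim_comp_2; [exact Hf|exact Sg|]. apply (filterlim_mult a (g t)).
  - eapply filterlim_comp_2; [apply filterlim_const|exact Hg|]. apply (filterlim_mult (f t) b).
Qed.

Lemma DW_comp I u h t a b : DerivWithin I u t a -> is_derive h (u t) b ->
  DerivWithin I (fun s => h (u s)) t (b * a).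
Proof.
  intros Hu Hh. pose proof (DW_shift I u t a Hu) as Su.
  set (y0 := u t) in *.
  set (phi := fun y => if Req_EM_T y y0 then b else (h y - h y0) / (y - y0)).
  assert (Cphi : filterlim phi (locally y0) (locally b)).
  { apply is_derive_Reals in Hh. apply filterlim_locally. intros eps.
    destruct (Hh eps (cond_pos eps)) as [d Hd]. exists d. intros y Hy. change R in y.
    apply ballR. unfold phi. destruct (Req_EM_T y y0) as [E|E].
    - rewrite Rminus_eq_0, Rabs_R0. apply cond_pos.
    - apply ballR in Hy. specialize (Hd (y - y0) ltac:(lra) Hy).
      now replace (y0 + (y - y0)) with y in Hd by ring. }
  unfold DerivWithin.
  apply filterlim_within_ext with (f := fun s => phi (u (t + s)) * ((u (t+s) - u t)/s)).
  { intros s [s0 _]. unfold phi. fold y0. destruct (Req_EM_T (u (t + s)) y0) as [E|E].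
    - rewrite E. unfold Rdiv. ring.
    - field. split; auto. lra. }
  eapply filterlim_comp_2; [| exact Hu | apply (filterlim_mult b a)].
  eapply filterlim_comp; [exact Su|exact Cphi].
Qed.

Lemma cont_of_derive f x l : is_derive f x l -> continuity_pt f x.
Proof.
  intro H. apply continuity_pt_filterlim. apply (ex_derive_continuous f x). now exists l.
Qed.

Lemma DW_lip a b f l M : (forall t, Icc a b t -> DerivWithin (Icc a b) f t (l t)) ->
  (forall t, Icc a b t -> Rabs (l t) <= M) ->
  forall x y, Icc a b x -> Icc a b y -> Rabs (f y - f x) <= M * Rabs (y - x).
Proof.
  intros HD HM.
  assert (Key : forall x y, Icc a b x -> Icc a b y -> x < y -> Rabs (f y - f x) <= M * (y - x)).
  { intros x y Ix Iy Hxy. apply le_epsilon. intros eps He.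
    assert (M0 : 0 <= M) by (eapply Rle_trans; [apply Rabs_pos|apply (HM x Ix)]).
    destruct (DW_cont _ _ _ _ (HD x Ix) (eps/2) ltac:(lra)) as [d1 [Hd1 C1]].
    destruct (DW_cont _ _ _ _ (HD y Iy) (eps/2) ltac:(lra)) as [d2 [Hd2 C2]].
    set (eta := Rmin (Rmin d1 d2) ((y - x)/3) / 2).
    assert (Hm : 0 < Rmin (Rmin d1 d2) ((y - x)/3)) by (repeat apply Rmin_pos; lra).
    assert (eta1 : eta < d1).
    { unfold eta. pose proof (Rmin_l (Rmin d1 d2) ((y - x)/3)). pose proof (Rmin_l d1 d2). lra. }
    assert (eta2 : eta < d2).
    { unfold eta. pose proof (Rmin_l (Rmin d1 d2) ((y - x)/3)). pose proof (Rmin_r d1 d2). lra. }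
    assert (eta3 : eta < (y - x) / 3).
    { unfold eta. pose proof (Rmin_r (Rmin d1 d2) ((y - x)/3)). lra. }
    assert (eta0 : 0 < eta) by (unfold eta; lra).
    set (x' := x + eta). set (y' := y - eta).
    unfold Icc in Ix, Iy.
    assert (Mid : Rabs (f y' - f x') <= M * (y' - x')).
    { destruct (MVT_gen f x' y' l) as [c [Hc Ec]].
      - intros s Hs. rewrite Rmin_left in Hs by (unfold x', y'; lra).
        rewrite Rmax_right in Hs by (unfold x', y'; lra).
        apply (derive_of_DW (Icc a b) f s (l s) (Rmin (s - a) (b - s))).
        + apply Rmin_pos; unfold x', y' in Hs; lra.
        + intros z Hz. unfold Icc. pose proof (Rmin_l (s - a) (b - s)). pose proof (Rmin_r (s - a) (b - s)).
          apply Rabs_def2 in Hz. lra.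
        + apply HD. unfold Icc, x', y' in *; lra.
      - intros s Hs. rewrite Rmin_left in Hs by (unfold x', y'; lra).
        rewrite Rmax_right in Hs by (unfold x', y'; lra).
        apply (cont_of_derive f s (l s)).
        apply (derive_of_DW (Icc a b) f s (l s) (Rmin (s - a) (b - s))).
        + apply Rmin_pos; unfold x', y' in Hs; lra.
        + intros z Hz. unfold Icc. pose proof (Rmin_l (s - a) (b - s)). pose proof (Rmin_r (s - a) (b - s)).
          apply Rabs_def2 in Hz. lra.
        + apply HD. unfold Icc, x', y' in *; lra.
      - rewrite Ec, Rabs_mult. rewrite (Rabs_right (y' - x')) by (unfold x', y'; lra).
        apply Rmult_le_compat_r; [unfold x', y'; lra|].
        rewrite Rmin_left in Hc by (unfold x', y'; lra).
        rewrite Rmax_right in Hc by (unfold x', y'; lra).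
        apply HM. unfold Icc, x', y' in *; lra. }
    assert (A1 : Rabs (f x' - f x) < eps/2).
    { apply C1. unfold Icc, x'; lra. unfold x'. replace (x + eta - x) with eta by ring.
      rewrite Rabs_right; lra. }
    assert (A2 : Rabs (f y' - f y) < eps/2).
    { apply C2. unfold Icc, y'; lra. unfold y'. replace (y - eta - y) with (- eta) by ring.
      rewrite Rabs_Ropp, Rabs_right; lra. }
    replace (f y - f x) with ((f y' - f x') - (f y' - f y) + (f x' - f x)) by ring.
    pose proof (Rabs_triang ((f y' - f x') - (f y' - f y)) (f x' - f x)).
    assert (H0 : Rabs ((f y' - f x') - (f y' - f y)) <= Rabs (f y' - f x') + Rabs (f y' - f y)).
    { replace ((f y' - f x') - (f y' - f y)) with ((f y' - f x') + (- (f y' - f y))) by ring.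
      rewrite <- (Rabs_Ropp (f y' - f y)). apply Rabs_triang. }
    assert (M * (y' - x') <= M * (y - x)) by (apply Rmult_le_compat_l; unfold x', y'; lra).
    lra. }
  intros x y Ix Iy. destruct (Rtotal_order x y) as [H|[H|H]].
  - rewrite (Rabs_right (y - x)) by lra. now apply Key.
  - subst. rewrite !Rminus_eq_0, Rabs_R0. right; ring.
  - rewrite <- Rabs_Ropp, Ropp_minus_distr, (Rabs_left (y - x)) by lra.
    replace (- (y - x)) with (x - y) by ring. now apply Key.
Qed.

Inductive ex := XQ | XP | XF (j : nat) | XG (j : nat) | XAdd (a b : ex) | XMul (a b : ex).

Fixpoint ev (Df Dg : nat -> R -> R) (q p : R -> R) (e : ex) (t : R) : R :=
  match e with
  | XQ => q t | XP => p t | XF j => Df j (p t) | XG j => Dg j (q t)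
  | XAdd a b => ev Df Dg q p a t + ev Df Dg q p b t
  | XMul a b => ev Df Dg q p a t * ev Df Dg q p b t
  end.

Fixpoint dex (e : ex) : ex :=
  match e with
  | XQ => XF 0 | XP => XG 0
  | XF j => XMul (XF (S j)) (XG 0)
  | XG j => XMul (XG (S j)) (XF 0)
  | XAdd a b => XAdd (dex a) (dex b)
  | XMul a b => XAdd (XMul (dex a) b) (XMul a (dex b))
  end.

Lemma ev_deriv (I : R -> Prop) Df Dg q p :
  (forall t, I t -> DerivWithin I q t (Df 0%nat (p t)) /\ DerivWithin I p t (Dg 0%nat (q t))) ->
  (forall t j, I t -> is_derive (Df j) (p t) (Df (S j) (p t))) ->
  (forall t j, I t -> is_derive (Dg j) (q t) (Dg (S j) (q t))) ->
  forall e t, I t -> DerivWithin I (ev Df Dg q p e) t (ev Df Dg q p (dex e) t).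
Proof.
  intros Hs HF HG e. induction e; intros t It; simpl.
  - apply Hs; auto.
  - apply Hs; auto.
  - apply (DW_comp I p (Df j)); [apply Hs; auto | apply HF; auto].
  - apply (DW_comp I q (Dg j)); [apply Hs; auto | apply HG; auto].
  - apply DW_plus; auto.
  - apply DW_mult; auto.
Qed.

Lemma smooth_of_sol (I : R -> Prop) Df Dg q p :
  (forall t, I t -> DerivWithin I q t (Df 0%nat (p t)) /\ DerivWithin I p t (Dg 0%nat (q t))) ->
  (forall t j, I t -> is_derive (Df j) (p t) (Df (S j) (p t))) ->
  (forall t j, I t -> is_derive (Dg j) (q t) (Dg (S j) (q t))) ->
  SmoothOn I q /\ SmoothOn I p.
Proof.
  intros Hs HF HG. split.
  - exists (fun k => ev Df Dg q p (Nat.iter k dex XQ)). split; [reflexivity|].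
    intros k t It. apply ev_deriv; auto.
  - exists (fun k => ev Df Dg q p (Nat.iter k dex XP)). split; [reflexivity|].
    intros k t It. apply ev_deriv; auto.
Qed.

Lemma SmoothOn_ext I f g : (forall t, f t = g t) -> SmoothOn I f -> SmoothOn I g.
Proof.
  intros E [D [H0 H1]]. exists D. split; auto. intros t It. rewrite H0; auto.
Qed.

Lemma inv_fun (phi : R -> R) a b : a < b ->
  (forall x, a <= x <= b -> continuity_pt phi x) ->
  (forall x y, a <= x -> x < y -> y <= b -> phi x < phi y) ->
  exists psi : R -> R, (forall y, phi a <= y <= phi b -> a <= psi y <= b /\ phi (psi y) = y) /\
    (forall x, a <= x <= b -> psi (phi x) = x).
Proof.
  intros Hab Hc Hi.
  assert (Hs : forall y, phi a <= y <= phi b -> {x | a <= x <= b /\ phi x = y}).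
  { intros y Hy. apply f_interv_is_interv; auto. }
  exists (fun y => match Rle_dec (phi a) y with
           | left h1 => match Rle_dec y (phi b) with
                        | left h2 => proj1_sig (Hs y (conj h1 h2)) | right _ => a end
           | right _ => a end).
  assert (P1 : forall y, phi a <= y <= phi b -> a <= (match Rle_dec (phi a) y with
           | left h1 => match Rle_dec y (phi b) with
                        | left h2 => proj1_sig (Hs y (conj h1 h2)) | right _ => a end
           | right _ => a end) <= b /\ phi (match Rle_dec (phi a) y with
           | left h1 => match Rle_dec y (phi b) with
                        | left h2 => proj1_sig (Hs y (conj h1 h2)) | right _ => a end
           | right _ => a end) = y).
  { intros y [Hy1 Hy2]. destruct (Rle_dec (phi a) y) as [h1|h1]; [|lra].
    destruct (Rle_dec y (phi b)) as [h2|h2]; [|lra].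
    destruct (Hs y (conj h1 h2)) as [x Hx]. simpl. exact Hx. }
  split; [exact P1|].
  intros x Hx.
  assert (Hr : phi a <= phi x <= phi b).
  { destruct Hx as [Hx1 Hx2]. split.
    - destruct (Req_dec a x) as [->|]; [lra|]. left; apply Hi; lra.
    - destruct (Req_dec x b) as [->|]; [lra|]. left; apply Hi; lra. }
  destruct (P1 (phi x) Hr) as [Hz Ez].
  set (z := match Rle_dec (phi a) (phi x) with
           | left h1 => match Rle_dec (phi x) (phi b) with
                        | left h2 => proj1_sig (Hs (phi x) (conj h1 h2)) | right _ => a end
           | right _ => a end) in *.
  destruct (Rtotal_order z x) as [H|[H|H]]; auto.
  - pose proof (Hi z x ltac:(lra) H ltac:(lra)). lra.
  - pose proof (Hi x z ltac:(lra) H ltac:(lra)). lra.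
Qed.

Lemma inv_deriv (phi psi dphi : R -> R) a b y : a < b ->
  (forall x, a <= x <= b -> is_derive phi x (dphi x)) ->
  (forall x y, a <= x -> x < y -> y <= b -> phi x < phi y) ->
  (forall y, phi a <= y <= phi b -> a <= psi y <= b /\ phi (psi y) = y) ->
  (forall x, a <= x <= b -> psi (phi x) = x) ->
  phi a < y < phi b -> dphi (psi y) <> 0 ->
  is_derive psi y (/ dphi (psi y)).
Proof.
  intros Hab Hd Hi Hps1 Hps2 Hy Hnz.
  assert (Hc : forall x, a <= x <= b -> continuity_pt phi x).
  { intros x Hx. apply (cont_of_derive _ _ (dphi x)). auto. }
  assert (Hab' : phi a < phi b) by (apply Hi; lra).
  assert (Prf : forall z, psi (phi a) <= z <= psi (phi b) -> derivable_pt phi z).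
  { intros z Hz. rewrite Hps2, Hps2 in Hz by lra. exists (dphi z).
    apply is_derive_Reals. auto. }
  assert (Prg : continuity_pt psi y).
  { apply (continuity_pt_recip_interv phi psi a b Hab Hi); auto.
    - intros x H1 H2. unfold comp, id. apply Hps1; lra.
    - intros x H1 H2. apply Hps1; lra. }
  assert (Prg_incr : psi (phi a) <= psi y <= psi (phi b)).
  { rewrite Hps2, Hps2 by lra. apply Hps1; lra. }
  pose proof (derivable_pt_lim_recip_interv phi psi (phi a) (phi b) y Prf Prg Hab' Hy Prg_incr) as R.
  assert (E : derive_pt phi (psi y) (Prf (psi y) Prg_incr) = dphi (psi y)).
  { apply derive_pt_eq_0. apply is_derive_Reals. apply Hd. apply Hps1; lra. }
  rewrite E in R. apply is_derive_Reals.
  replace (/ dphi (psi y)) with (1 / dphi (psi y)) by (field; auto).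
  apply R; auto.
  intros x Hx. unfold comp, id. apply Hps1; lra.
Qed.

Lemma isd_comp f g x df dg : is_derive f (g x) df -> is_derive g x dg ->
  is_derive (fun y => f (g y)) x (df * dg).
Proof.
  intros H1 H2. pose proof (is_derive_comp f g x df dg H1 H2) as H.
  rewrite Rmult_comm. exact H.
Qed.

Lemma isd_shift c x : is_derive (fun t => t - c) x 1.
Proof.
  pose proof (is_derive_minus (fun t : R => t) (fun _ => c) x one zero (is_derive_id x) (is_derive_const c x)) as H.
  replace 1 with (minus one zero : R) by (unfold minus, one, zero, plus, opp; simpl; ring).
  exact H.
Qed.

Lemma isd_minus_c f c x l : is_derive f x l -> is_derive (fun t => f t - c) x l.
Proof.
  intro H. pose proof (is_derive_minus f (fun _ => c) x l zero H (is_derive_const c x)) as H'.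
  replace l with (minus l zero : R) by (unfold minus, zero, plus, opp; simpl; ring).
  exact H'.
Qed.

Lemma isd_opp f x l : is_derive f x l -> is_derive (fun t => - f t) x (- l).
Proof. intro H. exact (is_derive_opp f x l H). Qed.

Lemma incr_of_deriv phi dphi a b : (forall x, a <= x <= b -> is_derive phi x (dphi x)) ->
  (forall x, a <= x <= b -> dphi x > 0) ->
  forall x y, a <= x -> x < y -> y <= b -> phi x < phi y.
Proof.
  intros Hd Hp x y H1 H2 H3.
  destruct (MVT_gen phi x y dphi) as [c [Hc Ec]].
  - intros z Hz. rewrite Rmin_left in Hz by lra. rewrite Rmax_right in Hz by lra. apply Hd; lra.
  - intros z Hz. rewrite Rmin_left in Hz by lra. rewrite Rmax_right in Hz by lra.
    apply (cont_of_derive _ _ (dphi z)). apply Hd; lra.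
  - rewrite Rmin_left in Hc by lra. rewrite Rmax_right in Hc by lra.
    assert (dphi c > 0) by (apply Hp; lra).
    assert (0 < dphi c * (y - x)) by (apply Rmult_lt_0_compat; lra). lra.
Qed.

Lemma cont_ed f x : continuity_pt f x -> forall eps, 0 < eps -> exists d, 0 < d /\
  forall y, Rabs (y - x) < d -> Rabs (f y - f x) < eps.
Proof.
  intros H eps He. unfold continuity_pt, continue_in, limit1_in, limit_in in H.
  destruct (H eps He) as [d [Hd Hy]]. exists d; split; auto. intros y Hyx.
  destruct (Req_dec x y) as [<-|Hne].
  - rewrite Rminus_eq_0, Rabs_R0; auto.
  - apply (Hy y). split. split; [exact I|auto]. exact Hyx.
Qed.

Lemma exist_sol (E f W w1 : R -> R) ps qs r0 ts :
  0 < r0 ->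
  (forall x, Rabs (x - ps) < r0 -> is_derive E x (f x)) ->
  (forall x, is_derive W x (w1 x)) ->
  (forall x, continuity_pt w1 x) ->
  w1 qs < 0 ->
  exists d Qs P, 0 < d /\ Qs ts = qs /\ P ts = ps /\
   (forall t, Rabs (t - ts) < d -> is_derive Qs t (f (P t)) /\ is_derive P t (- w1 (Qs t)) /\
        Rabs (P t - ps) < r0 /\ (ts < t -> ps < P t)).
Proof.
  intros Hr0 HE HW Hw1c Hw1.
  destruct (cont_ed w1 qs (Hw1c qs) (- w1 qs / 2) ltac:(lra)) as [da [Hda Ca]].
  set (a := da / 2).
  assert (Ha : 0 < a) by (unfold a; lra).
  assert (Wneg : forall y, qs - a <= y <= qs + a -> w1 y < 0).
  { intros y Hy. assert (Rabs (y - qs) < da) by (apply Rabs_def1; unfold a in Hy; lra).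
    specialize (Ca y H). apply Rabs_def2 in Ca. lra. }
  set (phi := fun x => - W x). set (dphi := fun x => - w1 x).
  assert (Hphid : forall x, is_derive phi x (dphi x)) by (intros x; apply isd_opp, HW).
  assert (Hphi_i : forall x y, qs - a <= x -> x < y -> y <= qs + a -> phi x < phi y).
  { apply (incr_of_deriv phi dphi); auto. intros x Hx. unfold dphi. specialize (Wneg x Hx). lra. }
  destruct (inv_fun phi (qs - a) (qs + a)) as [psi [Hps1 Hps2]]; [lra| |exact Hphi_i|].
  { intros x _. apply (cont_of_derive _ _ (dphi x)); auto. }
  assert (HA : phi (qs - a) < phi qs) by (apply Hphi_i; lra).
  assert (HB : phi qs < phi (qs + a)) by (apply Hphi_i; lra).
  set (c := E ps + W qs).
  assert (HEc : continuity_pt E ps).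
  { apply (cont_of_derive _ _ (f ps)). apply HE. rewrite Rminus_eq_0, Rabs_R0; auto. }
  destruct (cont_ed E ps HEc (Rmin (phi qs - phi (qs - a)) (phi (qs + a) - phi qs)))
    as [dE [HdE CE]]; [apply Rmin_pos; lra|].
  set (r1 := Rmin dE r0 / 2).
  assert (Hr1 : 0 < r1) by (unfold r1; pose proof (Rmin_pos dE r0 HdE Hr0); lra).
  assert (Hr1a : r1 < dE) by (unfold r1; pose proof (Rmin_l dE r0); pose proof (Rmin_pos dE r0 HdE Hr0); lra).
  assert (Hr1b : r1 < r0) by (unfold r1; pose proof (Rmin_r dE r0); pose proof (Rmin_pos dE r0 HdE Hr0); lra).
  assert (Hin : forall s, Rabs (s - ps) <= r1 -> phi (qs - a) < E s - c < phi (qs + a)).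
  { intros s Hs. assert (Rabs (s - ps) < dE) by lra. specialize (CE s H).
    pose proof (Rmin_l (phi qs - phi (qs - a)) (phi (qs + a) - phi qs)).
    pose proof (Rmin_r (phi qs - phi (qs - a)) (phi (qs + a) - phi qs)).
    apply Rabs_def2 in CE. unfold c. unfold phi in *. lra. }
  set (Q0 := fun s => psi (E s - c)).
  assert (HQ0 : forall s, Rabs (s - ps) <= r1 -> qs - a <= Q0 s <= qs + a /\
             is_derive Q0 s (/ (- w1 (Q0 s)) * f s)).
  { intros s Hs. specialize (Hin s Hs).
    assert (Hb : qs - a <= Q0 s <= qs + a) by (apply Hps1; lra).
    split; auto.
    apply (isd_comp psi (fun s => E s - c)).
    - apply (inv_deriv phi psi dphi (qs - a) (qs + a)); auto; try lra.
      + unfold dphi. specialize (Wneg _ Hb). unfold Q0 in Wneg. lra.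
    - apply isd_minus_c. apply HE. lra. }
  set (F := fun s => - w1 (Q0 s)).
  assert (HFp : forall s, Rabs (s - ps) <= r1 -> 0 < F s).
  { intros s Hs. unfold F. destruct (HQ0 s Hs) as [Hb _]. specialize (Wneg _ Hb). lra. }
  set (g := fun s => / F s).
  assert (Hgc : forall s, Rabs (s - ps) <= r1 -> continuity_pt g s).
  { intros s Hs. destruct (HQ0 s Hs) as [_ Hd].
    assert (C1 : continuity_pt F s).
    { exact (continuity_pt_opp (comp w1 Q0) s (continuity_pt_comp Q0 w1 s (cont_of_derive _ _ _ Hd) (Hw1c _))). }
    specialize (HFp s Hs).
    exact (continuity_pt_inv F s C1 ltac:(lra)). }
  set (T := fun s => RInt g ps s).
  assert (HT : forall s, Rabs (s - ps) < r1 -> is_derive T s (g s)).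
  { intros s Hs. apply (is_derive_RInt g T ps s).
    - assert (He : 0 < r1 - Rabs (s - ps)) by lra.
      exists (mkposreal _ He). intros b Hb. change (Rabs (b - s) < r1 - Rabs (s - ps)) in Hb.
      assert (Hex : @ex_RInt R_CompleteNormedModule g ps b).
      2: exact (RInt_correct g ps b Hex).
      apply ex_RInt_continuous.
      intros z Hz. refine (proj1 (continuity_pt_filterlim g z) _). apply Hgc.
      apply Rabs_def2 in Hb. pose proof (Rabs_def2 (s - ps) (Rabs (s - ps) + 1) ltac:(lra)).
      assert (Hb2 : Rabs (b - ps) < r1).
      { apply Rabs_def1.
        - pose proof (Rle_abs (s - ps)). lra.
        - pose proof (Rle_abs (- (s - ps))). rewrite Rabs_Ropp in H0. lra. }
      apply Rabs_def2 in Hb2. apply Rabs_le.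
      destruct Hz as [Hz1 Hz2].
      assert (Rmin ps b >= ps - r1) by (apply Rle_ge, Rmin_glb; lra).
      assert (Rmax ps b <= ps + r1) by (apply Rmax_lub; lra). lra.
    - refine (proj1 (continuity_pt_filterlim g s) _). apply Hgc. lra. }
  set (r2 := r1 / 2).
  assert (Hr2 : 0 < r2) by (unfold r2; lra).
  assert (HT2 : forall x, ps - r2 <= x <= ps + r2 -> is_derive T x (g x)).
  { intros x Hx. apply HT. apply Rabs_def1; unfold r2 in Hx; lra. }
  assert (Hgp : forall x, ps - r2 <= x <= ps + r2 -> g x > 0).
  { intros x Hx. unfold g. apply Rinv_0_lt_compat. apply HFp. apply Rabs_le. unfold r2 in Hx; lra. }
  assert (HTi : forall x y, ps - r2 <= x -> x < y -> y <= ps + r2 -> T x < T y)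
    by (apply (incr_of_deriv T g); auto).
  assert (HT0 : T ps = 0) by (unfold T; exact (@RInt_point R_CompleteNormedModule ps g)).
  destruct (inv_fun T (ps - r2) (ps + r2)) as [th [Hth1 Hth2]]; [lra| |exact HTi|].
  { intros x Hx. apply (cont_of_derive _ _ (g x)); auto. }
  assert (TA : T (ps - r2) < 0) by (rewrite <- HT0; apply HTi; lra).
  assert (TB : 0 < T (ps + r2)) by (rewrite <- HT0; apply HTi; lra).
  set (d := Rmin (- T (ps - r2)) (T (ps + r2))).
  assert (Hd : 0 < d) by (apply Rmin_pos; lra).
  exists d, (fun t => Q0 (th (t - ts))), (fun t => th (t - ts)).
  split; [exact Hd|]. split; [|split].
  - cbv beta. replace (ts - ts) with (T ps) by (rewrite HT0, Rminus_eq_0; reflexivity). rewrite Hth2 by lra.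
    unfold Q0. replace (E ps - c) with (phi qs) by (unfold c, phi; ring). apply Hps2; lra.
  - cbv beta. replace (ts - ts) with (T ps) by (rewrite HT0, Rminus_eq_0; reflexivity). apply Hth2; lra.
  - intros t Ht.
    assert (Htau : T (ps - r2) < t - ts < T (ps + r2)).
    { apply Rabs_def2 in Ht. pose proof (Rmin_l (- T (ps - r2)) (T (ps + r2))).
      pose proof (Rmin_r (- T (ps - r2)) (T (ps + r2))). fold d in H, H0. lra. }
    destruct (Hth1 (t - ts) ltac:(lra)) as [Hthb Hthe].
    assert (Hpb : Rabs (th (t - ts) - ps) <= r1) by (apply Rabs_le; unfold r2 in Hthb; lra).
    assert (HPd : is_derive (fun t => th (t - ts)) t (- w1 (Q0 (th (t - ts))))).
    { replace (- w1 (Q0 (th (t - ts)))) with (/ g (th (t - ts)) * 1).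
      2: { unfold g, F. rewrite Rinv_inv. ring. }
      apply (isd_comp th (fun t => t - ts)); [|apply isd_shift].
      apply (inv_deriv T th g (ps - r2) (ps + r2)); auto; [lra|].
      specialize (Hgp _ Hthb). lra. }
    split; [|split; [exact HPd|split]].
    + destruct (HQ0 _ Hpb) as [Hqb HQd].
      pose proof (isd_comp Q0 (fun t => th (t - ts)) t _ _ HQd HPd) as R.
      simpl in R. replace (f (th (t - ts))) with
        (/ - w1 (Q0 (th (t - ts))) * f (th (t - ts)) * - w1 (Q0 (th (t - ts)))).
      exact R. specialize (Wneg _ Hqb). field. lra.
    + apply Rabs_def1; unfold r2 in Hthb; lra.
    + intros Hts. destruct (Rlt_le_dec ps (th (t - ts))) as [Hlt|Hle]; auto.
      exfalso. destruct Hle as [Hlt|Heq].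
      * pose proof (HTi (th (t - ts)) ps ltac:(lra) Hlt ltac:(lra)). rewrite HT0, Hthe in H. lra.
      * rewrite Heq in Hthe. lra.
Qed.

Lemma zero_of_geom x B : 0 <= x -> (forall k, x <= B * (/ 2) ^ k) -> x = 0.
Proof.
  intros Hx H. destruct Hx as [Hx|]; auto. exfalso.
  assert (Hb : 0 < Rabs B + 1) by (pose proof (Rabs_pos B); lra).
  destruct (pow_lt_1_zero (/ 2) ltac:(rewrite Rabs_right; lra) (x / (Rabs B + 1)))
    as [N HN]; [apply Rdiv_lt_0_compat; lra|].
  specialize (HN N (le_n N)). specialize (H N).
  assert (B * (/ 2) ^ N <= Rabs B * Rabs ((/2) ^ N)).
  { rewrite <- Rabs_mult. apply Rle_abs. }
  assert (Rabs B * Rabs ((/2) ^ N) <= Rabs B * (x / (Rabs B + 1))).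
  { apply Rmult_le_compat_l; [apply Rabs_pos|lra]. }
  assert (Rabs B * (x / (Rabs B + 1)) < x).
  { apply Rlt_le_trans with ((Rabs B + 1) * (x / (Rabs B + 1))).
    - apply Rmult_lt_compat_r; [apply Rdiv_lt_0_compat|]; lra.
    - right; field; lra. }
  lra.
Qed.

Lemma uniq_sol (f w1 : R -> R) a b ts (q1 p1 q2 p2 : R -> R) L B :
  Icc a b ts -> 0 <= L -> (b - a) * L <= / 2 ->
  (forall t, Icc a b t -> DerivWithin (Icc a b) q1 t (f (p1 t)) /\ DerivWithin (Icc a b) p1 t (- w1 (q1 t))) ->
  (forall t, Icc a b t -> DerivWithin (Icc a b) q2 t (f (p2 t)) /\ DerivWithin (Icc a b) p2 t (- w1 (q2 t))) ->
  (forall t, Icc a b t -> Rabs (f (p1 t) - f (p2 t)) <= L * Rabs (p1 t - p2 t)) ->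
  (forall t, Icc a b t -> Rabs (w1 (q1 t) - w1 (q2 t)) <= L * Rabs (q1 t - q2 t)) ->
  (forall t, Icc a b t -> Rabs (q1 t - q2 t) <= B /\ Rabs (p1 t - p2 t) <= B) ->
  q1 ts = q2 ts -> p1 ts = p2 ts ->
  forall t, Icc a b t -> q1 t = q2 t /\ p1 t = p2 t.
Proof.
  intros Its HL HLab H1 H2 Lf Lw HB E1 E2.
  assert (K : forall k t, Icc a b t -> Rabs (q1 t - q2 t) <= B * (/2) ^ k /\ Rabs (p1 t - p2 t) <= B * (/2) ^ k).
  { induction k as [|k IH]; intros t It.
    - simpl. rewrite Rmult_1_r. auto.
    - assert (Hpk : 0 <= (/ 2) ^ k) by (apply pow_le; lra).
      assert (Htab : Rabs (t - ts) <= b - a) by (unfold Icc in *; apply Rabs_le; lra).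
      assert (Hab : 0 <= b - a) by (unfold Icc in *; lra).
      assert (B0 : 0 <= B) by (eapply Rle_trans; [apply Rabs_pos|]; apply (proj1 (HB ts Its))).
      split.
      + assert (D : forall s, Icc a b s -> DerivWithin (Icc a b) (fun s => q1 s + - q2 s) s (f (p1 s) + - f (p2 s))).
        { intros s Is. apply DW_plus; [apply H1|apply DW_opp, H2]; auto. }
        pose proof (DW_lip a b _ _ (L * (B * (/2)^k)) D) as LP.
        assert (Hbd : forall s, Icc a b s -> Rabs (f (p1 s) + - f (p2 s)) <= L * (B * (/ 2) ^ k)).
        { intros s Is. eapply Rle_trans; [apply Lf; auto|]. apply Rmult_le_compat_l; auto. apply IH; auto. }
        specialize (LP Hbd ts t Its It). cbv beta in LP. rewrite E1, Rplus_opp_r, Rminus_0_r in LP.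
        apply Rle_trans with (L * (B * (/ 2) ^ k) * (b - a)).
        { eapply Rle_trans; [exact LP|]. apply Rmult_le_compat_l; [|exact Htab].
          apply Rmult_le_pos; auto. apply Rmult_le_pos; auto. }
        simpl. replace (L * (B * (/ 2) ^ k) * (b - a)) with (((b - a) * L) * (B * (/ 2) ^ k)) by ring.
        replace (B * (/ 2 * (/ 2) ^ k)) with (/ 2 * (B * (/ 2) ^ k)) by ring.
        apply Rmult_le_compat_r; auto. apply Rmult_le_pos; auto.
      + assert (D : forall s, Icc a b s -> DerivWithin (Icc a b) (fun s => p1 s + - p2 s) s (- w1 (q1 s) + - - w1 (q2 s))).
        { intros s Is. apply DW_plus; [apply H1|apply DW_opp, H2]; auto. }
        pose proof (DW_lip a b _ _ (L * (B * (/2)^k)) D) as LP.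
        assert (Hbd : forall s, Icc a b s -> Rabs (- w1 (q1 s) + - - w1 (q2 s)) <= L * (B * (/ 2) ^ k)).
        { intros s Is. replace (- w1 (q1 s) + - - w1 (q2 s)) with (- (w1 (q1 s) - w1 (q2 s))) by ring.
          rewrite Rabs_Ropp. eapply Rle_trans; [apply Lw; auto|]. apply Rmult_le_compat_l; auto. apply IH; auto. }
        specialize (LP Hbd ts t Its It). cbv beta in LP. rewrite E2, Rplus_opp_r, Rminus_0_r in LP.
        apply Rle_trans with (L * (B * (/ 2) ^ k) * (b - a)).
        { eapply Rle_trans; [exact LP|]. apply Rmult_le_compat_l; [|exact Htab].
          apply Rmult_le_pos; auto. apply Rmult_le_pos; auto. }
        simpl. replace (L * (B * (/ 2) ^ k) * (b - a)) with (((b - a) * L) * (B * (/ 2) ^ k)) by ring.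
        replace (B * (/ 2 * (/ 2) ^ k)) with (/ 2 * (B * (/ 2) ^ k)) by ring.
        apply Rmult_le_compat_r; auto. apply Rmult_le_pos; auto. }
  intros t It. split.
  - assert (Rabs (q1 t - q2 t) = 0).
    { apply (zero_of_geom _ B); [apply Rabs_pos|]. intros k; apply K; auto. }
    apply Rminus_diag_uniq. destruct (Req_dec (q1 t - q2 t) 0); auto. exfalso; apply Rabs_no_R0 in H0; auto.
  - assert (Rabs (p1 t - p2 t) = 0).
    { apply (zero_of_geom _ B); [apply Rabs_pos|]. intros k; apply K; auto. }
    apply Rminus_diag_uniq. destruct (Req_dec (p1 t - p2 t) 0); auto. exfalso; apply Rabs_no_R0 in H0; auto.
Qed.

Lemma gap_pos V n (U : R -> Prop) ps
  (HA1b : forall p, U p -> p <> ps -> BlochBand V n p <> BlochBand V (S n) p)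
  (HA2 : exists M, 0 < M /\ forall p, closureR U p -> forall m, (1 <= m)%nat ->
           m <> n -> m <> S n ->
           Rabs (BlochBand V m p - BlochBand V (S n) p) >= M /\
           Rabs (BlochBand V n p - BlochBand V m p) >= M)
  p : U p -> p <> ps -> BandGap V n p > 0.
Proof.
  intros Up Hne. destruct HA2 as [M [HM HA2]].
  assert (Hcl : closureR U p) by (intros e He; exists p; split; auto; rewrite Rminus_eq_0, Rabs_R0; auto).
  set (x0 := Rabs (BlochBand V n p - BlochBand V (S n) p)).
  assert (Hx0 : 0 < x0).
  { unfold x0. apply Rabs_pos_lt. intro E. apply (HA1b p Up Hne). lra. }
  set (m := Rmin x0 M).
  assert (Hm : 0 < m) by (apply Rmin_pos; auto).
  unfold BandGap.
  set (S0 := fun x => exists m', (1 <= m')%nat /\ m' <> n /\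
                     x = Rabs (BlochBand V n p - BlochBand V m' p)).
  destruct (Glb_Rbar_correct S0) as [Hlb Hglb].
  assert (L1 : Rbar_le (Finite m) (Glb_Rbar S0)).
  { apply Hglb. intros x [m' [H1 [H2 ->]]]. simpl.
    destruct (Nat.eq_dec m' (S n)) as [->|H3].
    - apply Rmin_l.
    - destruct (HA2 p Hcl m' H1 H2 H3) as [_ H4]. pose proof (Rmin_r x0 M). fold m in H. lra. }
  assert (L2 : Rbar_le (Glb_Rbar S0) (Finite x0)).
  { apply Hlb. exists (S n). split; [lia|]. split; [lia|]. reflexivity. }
  destruct (Glb_Rbar S0) as [r| |]; simpl in *; try contradiction. lra.
Qed.

Lemma bound_on f a b : a <= b -> (forall x, a <= x <= b -> continuity_pt f x) ->
  exists M, 0 <= M /\ forall x, a <= x <= b -> Rabs (f x) <= M.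
Proof.
  intros Hab Hc.
  destruct (continuity_ab_maj (fun x => Rabs (f x)) a b Hab) as [Mx [HM _]].
  { intros c Hc'. exact (continuity_pt_comp f Rabs c (Hc c Hc') (Rcontinuity_abs _)). }
  exists (Rabs (f Mx)). split; [apply Rabs_pos|]. exact HM.
Qed.

Lemma lip_of_deriv h dh a b M : (forall x, a <= x <= b -> is_derive h x (dh x)) ->
  (forall x, a <= x <= b -> Rabs (dh x) <= M) ->
  forall x y, a <= x <= b -> a <= y <= b -> Rabs (h y - h x) <= M * Rabs (y - x).
Proof.
  intros Hd HM x y Hx Hy. apply (DW_lip a b h dh M); auto.
  intros t Ht. apply DW_of_derive. apply Hd. exact Ht.
Qed.

Lemma Rabs_le_inv' a b : Rabs a <= b -> - b <= a <= b.
Proof.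
  intros H. pose proof (Rle_abs a). pose proof (Rle_abs (- a)). rewrite Rabs_Ropp in H1. lra.
Qed.

Theorem proposition3p15
  (V W : R -> R)
  (HVsmooth : Smooth V) (HVper : Periodic1 V)
  (HWsmooth : Smooth W)
  (HWbdd : forall k : nat, exists C, forall x, Rabs (Derive_n W k x) <= C)
  (n : nat) (Hn : (1 <= n)%nat)
  (U : R -> Prop) (pstar : R)
  (HUopen : open U) (HUB : forall p, U p -> 0 <= p <= 2 * PI) (HUpstar : U pstar)
  (* (A1) *)
  (HA1a : BlochBand V n pstar = BlochBand V (S n) pstar)
  (HA1b : forall p, U p -> p <> pstar -> BlochBand V n p <> BlochBand V (S n) p)
  (* (A2) *)
  (HA2 : exists M, 0 < M /\ forall p, closureR U p -> forall m, (1 <= m)%nat ->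
           m <> n -> m <> S n ->
           Rabs (BlochBand V m p - BlochBand V (S n) p) >= M /\
           Rabs (BlochBand V n p - BlochBand V m p) >= M)
  (* (A3): smooth band functions E_+, E_- and smooth normalized eigenfunctions
     chi_+ = ap + i bp, chi_- = am + i bm (first argument p, second z) *)
  (HA3E : SmoothOn U (BandEplus V n pstar) /\ SmoothOn U (BandEminus V n pstar))
  (HA3chi : exists ap bp am bm : R -> R -> R,
     (forall p, U p ->
        BlochEigenfunction V p (BandEplus V n pstar p) (ap p) (bp p) /\
        Normalized (ap p) (bp p) /\
        BlochEigenfunction V p (BandEminus V n pstar p) (am p) (bm p) /\
        Normalized (am p) (bm p)) /\
     (forall z, SmoothOn U (fun p => ap p z) /\ SmoothOn U (fun p => bp p z) /\
                SmoothOn U (fun p => am p z) /\ SmoothOn U (fun p => bm p z)))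
  (* (A4) *)
  (HA4 : Derive (BandEplus V n pstar) pstar > 0 /\ 0 > Derive (BandEminus V n pstar) pstar)
  (* Band Crossing Scenario *)
  (q0 p0 tstar qstar : R) (q p : R -> R)
  (Htstar : 0 < tstar)
  (Hgap0 : BandGap V n p0 > 0)
  (Hq0 : q 0 = q0) (Hp0 : p 0 = p0)
  (Hqsm : SmoothOn (Ico 0 tstar) q) (Hpsm : SmoothOn (Ico 0 tstar) p)
  (Hsol : SolvesOn W (BlochBand V n) (Ico 0 tstar) q p)
  (Huniq : forall q' p' : R -> R,
     SmoothOn (Ico 0 tstar) q' -> SmoothOn (Ico 0 tstar) p' ->
     SolvesOn W (BlochBand V n) (Ico 0 tstar) q' p' ->
     q' 0 = q0 -> p' 0 = p0 ->
     forall t, Ico 0 tstar t -> q' t = q t /\ p' t = p t)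
  (Hgap : forall t, Ico 0 tstar t -> BandGap V n (p t) > 0)
  (Hplim : filterlim p (at_left tstar) (locally pstar))
  (Hqlim : filterlim q (at_left tstar) (locally qstar))
  (Hforce : - Derive W qstar > 0) :
  exists d0, 0 < d0 /\
  forall d, 0 < d <= d0 ->
  exists qm pm : R -> R,
    (* (i) *)
    (SmoothOn (Icc (tstar - d) (tstar + d)) qm /\
     SmoothOn (Icc (tstar - d) (tstar + d)) pm /\
     SolvesOn W (BandEminus V n pstar) (Icc (tstar - d) (tstar + d)) qm pm /\
     (forall t, Icc (tstar - d) (tstar + d) t -> U (pm t)) /\
     qm tstar = qstar /\ pm tstar = pstar /\
     (forall q' p' : R -> R,
        SmoothOn (Icc (tstar - d) (tstar + d)) q' ->
        SmoothOn (Icc (tstar - d) (tstar + d)) p' ->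
        SolvesOn W (BandEminus V n pstar) (Icc (tstar - d) (tstar + d)) q' p' ->
        (forall t, Icc (tstar - d) (tstar + d) t -> U (p' t)) ->
        q' tstar = qstar -> p' tstar = pstar ->
        forall t, Icc (tstar - d) (tstar + d) t -> q' t = qm t /\ p' t = pm t)) /\
    (* (ii) and (iii) *)
    (exists T0, tstar + d < T0 /\
     forall T', tstar + d <= T' <= T0 ->
     exists qn pn : R -> R,
       SolvesOn W (BlochBand V n) (Ioc tstar T') qn pn /\
       (forall t, Ioc tstar T' t -> 0 <= pn t <= 2 * PI) /\
       filterlim qn (at_right tstar) (locally qstar) /\
       filterlim pn (at_right tstar) (locally pstar) /\
       (forall t, Ioc tstar T' t -> BandGap V n (pn t) > 0) /\
       (forall t, Ioc tstar (tstar + d) t -> qm t = qn t /\ pm t = pn t) /\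
       SmoothOn (Icc (tstar - d) T')
         (fun t => if Rle_dec t (tstar + d) then qm t else qn t) /\
       SmoothOn (Icc (tstar - d) T')
         (fun t => if Rle_dec t (tstar + d) then pm t else pn t)).
Proof.
  set (E := BandEminus V n pstar).
  destruct HA3E as [_ [DE [HDE0 HDE]]].
  destruct (HUopen pstar HUpstar) as [rU HrU].
  assert (HrU' : forall y, Rabs (y - pstar) < rU -> U y).
  { intros y Hy. apply HrU. exact Hy. }
  assert (rUpos : 0 < rU) by apply cond_pos.
  assert (HisD : forall k x, U x -> is_derive (DE k) x (DE (S k) x)).
  { intros k x Ux. destruct (HUopen x Ux) as [e He].
    apply (derive_of_DW U _ _ _ e); [apply cond_pos| |apply HDE; auto].
    intros s Hs. apply He. exact Hs. }
  assert (HEd : forall x, U x -> is_derive E x (DE 1%nat x)).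
  { intros x Ux. destruct (HUopen x Ux) as [e He].
    apply (is_derive_ext_loc (DE 0%nat)); [|apply HisD; auto].
    exists e. intros y Hy. apply HDE0. apply He. exact Hy. }
  assert (HDerE : forall x, U x -> Derive E x = DE 1%nat x).
  { intros x Ux. apply is_derive_unique. auto. }
  assert (HWk : forall k x, is_derive (Derive_n W k) x (Derive_n W (S k) x)).
  { intros k x. apply Derive_correct. exact (HWsmooth (S k) x). }
  set (w1 := Derive W).
  assert (HWd : forall x, is_derive W x (w1 x)) by (intros x; exact (HWk 0%nat x)).
  assert (Hw1c : forall x, continuity_pt w1 x).
  { intros x. apply (cont_of_derive _ _ (Derive_n W 2 x)). exact (HWk 1%nat x). }
  assert (Hw1 : w1 qstar < 0) by (unfold w1; lra).
  set (r0 := rU / 2).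
  assert (Hr0 : 0 < r0) by (unfold r0; lra).
  assert (HK : forall x, pstar - r0 <= x <= pstar + r0 -> U x).
  { intros x Hx. apply HrU'. apply Rabs_def1; unfold r0 in Hx; lra. }
  destruct (exist_sol E (DE 1%nat) W w1 pstar qstar r0 tstar Hr0) as [dl [Qs [P [Hdl [HQs0 [HP0 HSol]]]]]];
    auto.
  { intros x Hx. apply HEd. apply HrU'. unfold r0 in Hx; lra. }
  assert (HPU : forall t, Rabs (t - tstar) < dl -> U (P t)).
  { intros t Ht. apply HK. destruct (HSol t Ht) as [_ [_ [H _]]]. apply Rabs_def2 in H. lra. }
  assert (Hsm : forall I : R -> Prop, (forall t, I t -> Rabs (t - tstar) < dl) ->
            SmoothOn I Qs /\ SmoothOn I P).
  { intros I HI.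
    apply (smooth_of_sol I (fun j => DE (S j)) (fun j x => - Derive_n W (S j) x)).
    - intros t It. destruct (HSol t (HI t It)) as [H1 [H2 _]].
      split; apply DW_of_derive; auto.
    - intros t j It. apply HisD. apply HPU; auto.
    - intros t j It. apply isd_opp. apply HWk. }
  destruct (bound_on (DE 2%nat) (pstar - r0) (pstar + r0)) as [Lf [HLf0 HLf]]; [lra| |].
  { intros x Hx. apply (cont_of_derive _ _ (DE 3%nat x)). apply HisD, HK; auto. }
  destruct (bound_on (DE 1%nat) (pstar - r0) (pstar + r0)) as [Mf [HMf0 HMf]]; [lra| |].
  { intros x Hx. apply (cont_of_derive _ _ (DE 2%nat x)). apply HisD, HK; auto. }
  destruct (HWbdd 1%nat) as [C1 HC1]. destruct (HWbdd 2%nat) as [C2 HC2].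
  assert (HC1p : 0 <= C1) by (eapply Rle_trans; [apply Rabs_pos|apply (HC1 0)]).
  assert (HC2p : 0 <= C2) by (eapply Rle_trans; [apply Rabs_pos|apply (HC2 0)]).
  set (L := Lf + C2 + 1).
  assert (HL : 0 < L) by (unfold L; lra).
  assert (Lipf : forall x y, pstar - r0 <= x <= pstar + r0 -> pstar - r0 <= y <= pstar + r0 ->
             Rabs (DE 1%nat x - DE 1%nat y) <= L * Rabs (x - y)).
  { intros x y Hx Hy. eapply Rle_trans.
    - apply (lip_of_deriv (DE 1%nat) (DE 2%nat) (pstar - r0) (pstar + r0) Lf); auto.
    - apply Rmult_le_compat_r; [apply Rabs_pos|unfold L; lra]. }
  assert (Lipw : forall x y, Rabs (w1 x - w1 y) <= L * Rabs (x - y)).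
  { intros x y. eapply Rle_trans.
    - apply (lip_of_deriv w1 (Derive_n W 2) (Rmin x y) (Rmax x y) C2).
      + intros z _. exact (HWk 1%nat z).
      + intros z _. apply HC2.
      + split; [apply Rmin_r|apply Rmax_r].
      + split; [apply Rmin_l|apply Rmax_l].
    - apply Rmult_le_compat_r; [apply Rabs_pos|unfold L; lra]. }
  set (d0 := Rmin (Rmin (dl / 4) (r0 / (C1 + 1))) (Rmin (/ (4 * L)) 1)).
  assert (Hd0a : d0 <= dl / 4) by (unfold d0; eapply Rle_trans; apply Rmin_l).
  assert (Hd0b : d0 <= r0 / (C1 + 1)) by (unfold d0; eapply Rle_trans; [apply Rmin_l|apply Rmin_r]).
  assert (Hd0c : d0 <= / (4 * L)) by (unfold d0; eapply Rle_trans; [apply Rmin_r|apply Rmin_l]).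
  assert (Hd0d : d0 <= 1) by (unfold d0; eapply Rle_trans; apply Rmin_r).
  assert (Hd0 : 0 < d0).
  { unfold d0. repeat apply Rmin_pos; try lra.
    - apply Rdiv_lt_0_compat; lra.
    - apply Rinv_0_lt_compat; lra. }
  exists d0. split; [exact Hd0|]. intros d [Hd Hdd0].
  exists Qs, P.
  assert (HIcc : forall t, Icc (tstar - d) (tstar + d) t -> Rabs (t - tstar) < dl).
  { intros t [H1 H2]. apply Rabs_def1; lra. }
  split.
  {
    destruct (Hsm _ HIcc) as [SQ SP].
    split; [exact SQ|]. split; [exact SP|].
    split.
    { intros t It. destruct (HSol t (HIcc t It)) as [H1 [H2 _]].
      rewrite HDerE by (apply HPU; auto).
      split; apply DW_of_derive; auto. }
    split; [intros t It; apply HPU; auto|].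
    split; [exact HQs0|]. split; [exact HP0|].
    intros q' p' _ _ Hs' HU' Hq0' Hp0'.
    assert (Its : Icc (tstar - d) (tstar + d) tstar) by (unfold Icc; lra).
    assert (Hs2 : forall t, Icc (tstar - d) (tstar + d) t ->
      DerivWithin (Icc (tstar - d) (tstar + d)) q' t (DE 1%nat (p' t)) /\
      DerivWithin (Icc (tstar - d) (tstar + d)) p' t (- w1 (q' t))).
    { intros t It. destruct (Hs' t It) as [H1 H2]. rewrite HDerE in H1 by auto. auto. }
    assert (Hs1 : forall t, Icc (tstar - d) (tstar + d) t ->
      DerivWithin (Icc (tstar - d) (tstar + d)) Qs t (DE 1%nat (P t)) /\
      DerivWithin (Icc (tstar - d) (tstar + d)) P t (- w1 (Qs t))).
    { intros t It. destruct (HSol t (HIcc t It)) as [H1 [H2 _]]. split; apply DW_of_derive; auto. }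
    assert (Htd : forall t, Icc (tstar - d) (tstar + d) t -> Rabs (t - tstar) <= d).
    { intros t [H1 H2]. apply Rabs_le; lra. }
    assert (Hdr : C1 * d <= r0).
    { apply Rle_trans with (C1 * (r0 / (C1 + 1))).
      - apply Rmult_le_compat_l; lra.
      - apply Rle_trans with ((C1 + 1) * (r0 / (C1 + 1))).
        + apply Rmult_le_compat_r; [apply Rlt_le, Rdiv_lt_0_compat|]; lra.
        + right; field; lra. }
    assert (Hp'K : forall t, Icc (tstar - d) (tstar + d) t -> pstar - r0 <= p' t <= pstar + r0).
    { intros t It.
      pose proof (DW_lip (tstar - d) (tstar + d) p' (fun s => - w1 (q' s)) C1
                    (fun s Hs => proj2 (Hs2 s Hs))) as LP.
      assert (Hb : forall s, Icc (tstar - d) (tstar + d) s -> Rabs (- w1 (q' s)) <= C1).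
      { intros s _. rewrite Rabs_Ropp. apply HC1. }
      specialize (LP Hb tstar t Its It). rewrite Hp0' in LP.
      assert (C1 * Rabs (t - tstar) <= C1 * d) by (apply Rmult_le_compat_l; auto).
      assert (Rabs (p' t - pstar) <= r0) by lra. apply Rabs_le_inv' in H0. lra. }
    assert (HPK : forall t, Icc (tstar - d) (tstar + d) t -> pstar - r0 <= P t <= pstar + r0).
    { intros t It. destruct (HSol t (HIcc t It)) as [_ [_ [H _]]]. apply Rabs_def2 in H. lra. }
    apply (uniq_sol (DE 1%nat) w1 (tstar - d) (tstar + d) tstar q' p' Qs P L (2 * r0 + 2 * Mf)).
    - exact Its.
    - lra.
    - replace (tstar + d - (tstar - d)) with (2 * d) by ring.
      apply Rle_trans with (2 * / (4 * L) * L).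
      + apply Rmult_le_compat_r; lra.
      + right; field; lra.
    - exact Hs2.
    - exact Hs1.
    - intros t It. apply Lipf; auto.
    - intros t It. apply Lipw.
    - intros t It. split.
      + assert (Bq : forall (qq pp : R -> R), qq tstar = qstar ->
            (forall s, Icc (tstar - d) (tstar + d) s -> DerivWithin (Icc (tstar - d) (tstar + d)) qq s (DE 1%nat (pp s))) ->
            (forall s, Icc (tstar - d) (tstar + d) s -> pstar - r0 <= pp s <= pstar + r0) ->
            Rabs (qq t - qstar) <= Mf).
        { intros qq pp H0 HD HK'.
          pose proof (DW_lip (tstar - d) (tstar + d) qq (fun s => DE 1%nat (pp s)) Mf HD) as LP.
          assert (Hb : forall s, Icc (tstar - d) (tstar + d) s -> Rabs (DE 1%nat (pp s)) <= Mf).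
          { intros s Hs. apply HMf. auto. }
          specialize (LP Hb tstar t Its It). rewrite H0 in LP.
          eapply Rle_trans; [exact LP|].
          assert (Rabs (t - tstar) <= 1) by (specialize (Htd t It); lra).
          apply Rle_trans with (Mf * 1); [apply Rmult_le_compat_l; auto|lra]. }
        pose proof (Bq q' p' Hq0' (fun s Hs => proj1 (Hs2 s Hs)) Hp'K).
        pose proof (Bq Qs P HQs0 (fun s Hs => proj1 (Hs1 s Hs)) HPK).
        replace (q' t - Qs t) with ((q' t - qstar) - (Qs t - qstar)) by ring.
        eapply Rle_trans; [apply Rabs_triang|]. rewrite Rabs_Ropp. lra.
      + specialize (Hp'K t It). specialize (HPK t It).
        apply Rabs_le. lra.
    - rewrite Hq0', HQs0. reflexivity.
    - rewrite Hp0', HP0. reflexivity. }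
  exists (tstar + dl / 2). split; [lra|].
  intros T' HT'. exists Qs, P.
  assert (HIoc : forall t, Ioc tstar T' t -> Rabs (t - tstar) < dl).
  { intros t [H1 H2]. apply Rabs_def1; lra. }
  assert (HPgt : forall t, Ioc tstar T' t -> pstar < P t).
  { intros t It. destruct (HSol t (HIoc t It)) as [_ [_ [_ H]]]. apply H. destruct It; lra. }
  assert (Hcont : forall (h : R -> R) l, is_derive h tstar l -> filterlim h (at_right tstar) (locally (h tstar))).
  { intros h l Hh. eapply filterlim_filter_le_1; [apply filter_le_within|].
    apply (ex_derive_continuous h). exists l. exact Hh. }
  assert (Ht0 : Rabs (tstar - tstar) < dl) by (rewrite Rminus_eq_0, Rabs_R0; lra).
  split.
  { intros t It. destruct (HSol t (HIoc t It)) as [H1 [H2 _]].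
    assert (HB : Derive (BlochBand V n) (P t) = DE 1%nat (P t)).
    { apply is_derive_unique. apply (is_derive_ext_loc E).
      - assert (He : 0 < P t - pstar) by (specialize (HPgt t It); lra).
        exists (mkposreal _ He). intros y Hy. change (Rabs (y - P t) < P t - pstar) in Hy.
        apply Rabs_def2 in Hy. unfold E, BandEminus.
        destruct (Rlt_dec y pstar); [lra|reflexivity].
      - apply HEd. apply HPU; auto. }
    rewrite HB. split; apply DW_of_derive; auto. }
  split.
  { intros t It. apply HUB. apply HPU. auto. }
  split.
  { rewrite <- HQs0. destruct (HSol tstar Ht0) as [H1 _]. eapply Hcont; exact H1. }
  split.
  { rewrite <- HP0. destruct (HSol tstar Ht0) as [_ [H2 _]]. eapply Hcont; exact H2. }
  split.
  { intros t It. apply (gap_pos V n U pstar HA1b HA2).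
    - apply HPU; auto.
    - specialize (HPgt t It). lra. }
  split.
  { intros t _. split; reflexivity. }
  assert (HIcc2 : forall t, Icc (tstar - d) T' t -> Rabs (t - tstar) < dl).
  { intros t [H1 H2]. apply Rabs_def1; lra. }
  destruct (Hsm _ HIcc2) as [SQ SP].
  split.
  - apply (SmoothOn_ext _ Qs); [|exact SQ]. intros t. destruct (Rle_dec t (tstar + d)); reflexivity.
  - apply (SmoothOn_ext _ P); [|exact SP]. intros t. destruct (Rle_dec t (tstar + d)); reflexivity.
Qed.
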